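(* Let $P$ be a quasi-lattice ordered subsemigroup of a group $Q$ and $\Lambda$ an $(r,d)$-proper topological $P$-graph, with path space $\Omega$ and boundary path space $\partial\Omega$. Then (a) $\partial\Omega$ is a closed subset of $\Omega$; (b) if $A\in\partial\Omega$ and $n\in P$ with $A\cdot n\neq\emptyset$, then $A\cdot n\in\partial\Omega$; (c) if $B\in\partial\Omega$ and $\rho\in\Lambda$ satisfies $s(\rho)=r(B)$, then $\rho B\in\partial\Omega$.
   Context: Quasi-lattice ordered: $P\subset Q$ subsemigroup with $P\cap P^{-1}=\{e\}$ such that any two elements having a common upper bound (for $m\le n$ iff $n=mp$, $p\in P$) have a least upper bound. Topological $P$-graph: small category $\Lambda$, vertices $\Lambda^{(0)}\subset\Lambda$, $r,s:\Lambda\to\Lambda^{(0)}$, composition on composable pairs ($s(\lambda)=r(\mu)$); $\Lambda,\Lambda^{(0)}$ locally compact Hausdorff, $r,s$ continuous, $s$ a local homeomorphism, inclusion continuous, composition continuous and open; continuous $d:\Lambda\to P$ multiplicative, $e$ on vertices, with composition $\Lambda^m*\Lambda^n\to\Lambda^{mn}$ a homeomorphism. $(r,d)$-proper: $(r,d):\Lambda\to\Lambda^{(0)}\times P$ proper. $\mu\le\lambda$ iff $\lambda=\mu\nu$. $\Omega$: nonempty closed hereditary directed subsets of $\Lambda$ with the relative Fell topology; every $A\in\Omega$ is contained in $r^{-1}(x)$ for a unique vertex $x=:r(A)$. $A\cdot n=\{\nu:\exists\mu\in\Lambda^n,\mu\nu\in A\}$; $\rho B=\bigcup_{\nu\in B}\{\lambda:\lambda\le\rho\nu\}$.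 $E\subset\Lambda$ is exhaustive if for every $\lambda$ with $r(\lambda)\in r(E)$ there is $\mu\in E$ such that $\lambda,\mu$ have a common upper bound. For $A\in\Omega$, $\lambda\in A$ is extendable in $A$ if for every compact exhaustive $E$ with $r(E)$ a neighborhood of $s(\lambda)$ there is $\mu\in E$ with $\lambda\mu\in A$. $A$ is a boundary path if all its elements are extendable in $A$; $\partial\Omega$ is the set of boundary paths. *)

(* Defs.v *)
From mathcomp Require Import all_boot.
From mathcomp Require Import boolp classical_sets cardinality topology.

Set Implicit Arguments.
Unset Strict Implicit.
Unset Printing Implicit Defensive.

Local Open Scope classical_set_scope.

Record group_law (Q : Type) := GroupLaw {
  gmul : Q -> Q -> Q;
  ginv : Q -> Q;
  gone : Q;
  gmulA : forall x y z, gmul x (gmul y z) = gmul (gmul x y) z;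
  gmul1 : forall x, gmul gone x = x;
  gmulx1 : forall x, gmul x gone = x;
  gmulV : forall x, gmul (ginv x) x = gone;
  gmulxV : forall x, gmul x (ginv x) = gone }.

Definition qle Q (G : group_law Q) (P : set Q) (m n : Q) : Prop :=
  exists2 p, P p & n = gmul G m p.

Definition quasi_lattice_ordered Q (G : group_law Q) (P : set Q) : Prop :=
  [/\ (forall p q, P p -> P q -> P (gmul G p q)),
      (forall x, (P x /\ P (ginv G x)) <-> x = gone G) &
      (forall m n, P m -> P n ->
         (exists k, qle G P m k /\ qle G P n k) ->
         exists l, [/\ qle G P m l, qle G P n l &
                    forall k, qle G P m k -> qle G P n k -> qle G P l k])].

(* Data of a topological P-graph: morphism space L, vertex space V,     *)
(* the inclusion of vertices (as identity morphisms), range, source,    *)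
(* (total, only meaningful on composable pairs) composition and degree. *)
Record PGraph (Q : Type) (L V : topologicalType) := MkPGraph {
  vtx : V -> L;
  rng : L -> V;
  src : L -> V;
  comp : L -> L -> L;
  deg : L -> Q }.

Section PGraphDefs.
Context {Q : Type} (G : group_law Q) (P : set Q) {L V : topologicalType}.
Variable g : PGraph Q L V.

Definition composable : set (L * L) := [set x | src g x.1 = rng g x.2].
Definition compU (x : L * L) : L := comp g x.1 x.2.

Definition local_homeo (T U : topologicalType) (f : T -> U) : Prop :=
  forall x, exists O : set T,
    [/\ open O, O x, (forall y z, O y -> O z -> f y = f z -> y = z),
        {within O, continuous f} &
        (forall W, open W -> W `<=` O -> open (f @` W))].

Definition is_topological_PGraph : Prop :=
  [/\
      [/\ injective (vtx g),
          (forall v, rng g (vtx g v) = v /\ src g (vtx g v) = v),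
          (forall l, comp g (vtx g (rng g l)) l = l /\ comp g l (vtx g (src g l)) = l),
          (forall l m, src g l = rng g m ->
             rng g (comp g l m) = rng g l /\ src g (comp g l m) = src g m) &
          (forall l m n, src g l = rng g m -> src g m = rng g n ->
             comp g (comp g l m) n = comp g l (comp g m n))],
      [/\ hausdorff_space L, locally_compact [set: L],
          hausdorff_space V, locally_compact [set: V] &
          [/\ continuous (rng g) /\ continuous (src g), local_homeo (src g),
              continuous (vtx g),
              {within composable, continuous compU} &
              (forall W : set (L * L), open W -> open (compU @` (W `&` composable)))]] &
      (* degree functor d : Lambda -> P, continuous for the discrete topology *)
      [/\ (forall l, P (deg g l)),
          (forall n, open (deg g @^-1` [set n])),
          (forall v, deg g (vtx g v) = gone G),
          (forall l m, src g l = rng g m -> deg g (comp g l m) = gmul G (deg g l) (deg g m)) &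
          (* composition Lambda^m * Lambda^n -> Lambda^{mn} is a homeomorphism *)
          (forall m n, P m -> P n -> exists fac : L -> L * L,
             [/\ (forall l, deg g l = gmul G m n ->
                    [/\ composable (fac l), deg g (fac l).1 = m,
                        deg g (fac l).2 = n & compU (fac l) = l]),
                 (forall x y, src g x = rng g y -> deg g x = m -> deg g y = n ->
                    fac (comp g x y) = (x, y)) &
                 {within deg g @^-1` [set gmul G m n], continuous fac}])]].

(* (r,d) : Lambda -> Lambda^0 x P is proper (P discrete) *)
Definition rd_proper : Prop :=
  forall (K : set V) (n : Q), compact K -> P n ->
    compact (rng g @^-1` K `&` deg g @^-1` [set n]).

Definition lep (mu la : L) : Prop :=
  exists nu, src g mu = rng g nu /\ la = comp g mu nu.

Definition hereditary (A : set L) : Prop :=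
  forall la mu, A la -> lep mu la -> A mu.

Definition directed (A : set L) : Prop :=
  forall la mu, A la -> A mu -> exists nu, [/\ A nu, lep la nu & lep mu nu].

Definition Omega (A : set L) : Prop :=
  [/\ A !=set0, closed A, hereditary A & directed A].

Definition dotP (A : set L) (n : Q) : set L :=
  [set nu | exists mu, [/\ deg g mu = n, src g mu = rng g nu & A (comp g mu nu)]].

Definition rho_mul (rho : L) (B : set L) : set L :=
  [set la | exists nu, [/\ B nu, src g rho = rng g nu & lep la (comp g rho nu)]].

Definition exhaustive (E : set L) : Prop :=
  forall la, (rng g @` E) (rng g la) ->
    exists2 mu, E mu & exists nu, lep la nu /\ lep mu nu.

Definition extendable (A : set L) (la : L) : Prop :=
  A la /\
  forall E : set L, compact E -> exhaustive E -> nbhs (src g la) (rng g @` E) ->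
    exists mu, [/\ E mu, src g la = rng g mu & A (comp g la mu)].

Definition boundary_path (A : set L) : Prop :=
  Omega A /\ forall la, A la -> extendable A la.

(* Fell topology on closed subsets of L: basic open sets
   U(K; F) = {B | B cap K = 0, B cap U <> 0 for U in F},
   K compact, F a finite family of open sets. *)
Definition fell_basic (K : set L) (F : set (set L)) (B : set L) : Prop :=
  B `&` K = set0 /\ forall U, F U -> B `&` U !=set0.

(* S is closed in Omega for the relative Fell topology:
   its complement in Omega is relatively open. *)
Definition closed_in_Omega (S : set (set L)) : Prop :=
  forall A, Omega A -> ~ S A ->
    exists K F, [/\ compact K, finite_set F, (forall U, F U -> open U),
                    fell_basic K F A &
                    forall B, Omega B -> fell_basic K F B -> ~ S B].

End PGraphDefs.

(* Main.v *)
Require Import Defs.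
From mathcomp Require Import all_boot.
From mathcomp Require Import boolp classical_sets cardinality topology.
Set Implicit Arguments.
Unset Strict Implicit.
Unset Printing Implicit Defensive.
Local Open Scope classical_set_scope.

Section Top.
Context {X Y : topologicalType}.

Definition cont_on (D : set X) (f : X -> Y) :=
  forall x, D x -> forall O, nbhs (f x) O -> nbhs x (fun y => D y -> O (f y)).

Lemma cont_on_within D f : {within D, continuous f} -> cont_on D f.
Proof.
move=> /subspace_continuousP H x Dx O NO.
by have := H x Dx O NO.
Qed.

Lemma cont_on_cont D f : continuous f -> cont_on D f.
Proof. move=> H x _ O NO; have h : nbhs x (f @^-1` O) := H x O NO. by apply: filterS h => y Oy _. Qed.

Lemma cont_onS D D' f : D' `<=` D -> cont_on D f -> cont_on D' f.
Proof.
move=> sub H x Dx O NO; have := H x (sub _ Dx) O NO.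
by apply: filterS => y h /sub; apply: h.
Qed.

Lemma nbhs_pair (a : X) (b : Y) (N1 : set X) (N2 : set Y) :
  nbhs a N1 -> nbhs b N2 -> nbhs (a, b) (N1 `*` N2).
Proof. by move=> h1 h2; exists (N1, N2). Qed.

Lemma nbhs_pairE (a : X) (b : Y) (O : set (X * Y)) : nbhs (a, b) O ->
  exists N1 N2, [/\ nbhs a N1, nbhs b N2 & forall x y, N1 x -> N2 y -> O (x, y)].
Proof. by case=> -[N1 N2] /= [h1 h2] sub; exists N1, N2; split => // x y ? ?; apply: sub. Qed.

Lemma closed_eq (D : set X) (f1 f2 : X -> Y) : hausdorff_space Y ->
  closed D -> cont_on D f1 -> cont_on D f2 ->
  closed (D `&` [set z | f1 z = f2 z]).
Proof.
move=> hY cD c1 c2 z cz.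
have Dz : D z.
  apply: cD => B NB; have [w [[Dw _] Bw]] := cz B NB; by exists w.
split => //; apply: hY => A B NA NB.
have N := @filterI _ _ (nbhs_filter z) _ _ (c1 z Dz A NA) (c2 z Dz B NB).
have [w [[Dw ew] [h1 h2]]] := cz _ N.
by exists (f1 w); split; [apply: h1|rewrite ew; apply: h2].
Qed.

Lemma closed_pre (D : set X) (f : X -> Y) (Z : set Y) :
  closed D -> cont_on D f -> closed Z -> closed (D `&` f @^-1` Z).
Proof.
move=> cD cf cZ z cz.
have Dz : D z.
  apply: cD => B NB; have [w [[Dw _] Bw]] := cz B NB; by exists w.
split => //; apply: cZ => B NB.
have [w [[Dw Zw] h]] := cz _ (cf z Dz B NB).
by exists (f w); split => //; apply: h.
Qed.

Lemma proj_closed (K : set X) (C : set (X * Y)) :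
  compact K -> closed C -> closed [set y | exists x, K x /\ C (x, y)].
Proof.
move=> cK cC y cy.
pose F := filter_from (nbhs y)
   (fun N => [set x | K x /\ exists y', N y' /\ C (x, y')]).
have FF : ProperFilter F.
  apply: filter_from_proper.
    apply: filter_from_filter; first by exists setT; apply: filterT.
    move=> N1 N2 h1 h2; exists (N1 `&` N2); first exact: filterI.
    by move=> x [Kx [y' [[n1 n2] Cy]]]; split; split => //; exists y'.
  move=> N NN; have [y' [[x [Kx Cx]] Ny']] := cy N NN.
  by exists x; split => //; exists y'.
have FK : F K by exists setT; [apply: filterT| move=> x []].
have [x [Kx clx]] := cK F FF FK.
exists x; split => //; apply: cC => O NO.
have [N1 [N2 [n1 n2 sub]]] := nbhs_pairE NO.
have FN2 : F [set x | K x /\ exists y', N2 y' /\ C (x,y')] by exists N2.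
have [x' [[Kx' [y' [Ny' Cxy]]] Nx']] := clx _ _ FN2 n1.
by exists (x', y'); split => //; apply: sub.
Qed.

End Top.

Lemma compact_nbhs_in {X : topologicalType} (x : X) (U O : set X) :
  hausdorff_space X -> nbhs x U -> compact U -> closed U -> nbhs x O ->
  exists W, [/\ compact W, nbhs x W & W `<=` O].
Proof.
move=> hX NU cU clU NO.
have := compact_regular hX cU NU NO; case=> D ND sub.
exists (closure (D `&` U)); split.
- apply: (@subclosed_compact _ _ U); [exact: closed_closure| exact: cU|].
  by move=> z /(closureS (@subIsetr _ D U)); rewrite -(proj1 (closure_id U) clU).
- apply: filterS (@subset_closure _ (D `&` U)) _.
  by apply: (@filterI _ _ (nbhs_filter x)).
- by move=> z /(closureS (@subIsetl _ D U)) /sub.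
Qed.

Section Top2.
Context {X Y Z : topologicalType}.

Lemma cont_on_comp (D : set X) (E : set Y) (f : X -> Y) (h : Y -> Z) :
  cont_on D f -> cont_on E h -> (forall x, D x -> E (f x)) -> cont_on D (h \o f).
Proof.
move=> cf ch DE x Dx O NO.
have := cf x Dx _ (ch (f x) (DE x Dx) O NO).
by apply: filterS => y h1 Dy; apply: (h1 Dy (DE y Dy)).
Qed.

Lemma cont_on_pair (D : set X) (f1 : X -> Y) (f2 : X -> Z) :
  cont_on D f1 -> cont_on D f2 -> cont_on D (fun x => (f1 x, f2 x)).
Proof.
move=> c1 c2 x Dx O NO.
have [N1 [N2 [n1 n2 sub]]] := nbhs_pairE NO.
have := @filterI _ _ (nbhs_filter x) _ _ (c1 x Dx _ n1) (c2 x Dx _ n2).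
by apply: filterS => y [h1 h2] Dy; apply: sub; [apply: h1|apply: h2].
Qed.
End Top2.

Lemma fst_cont {X Y : topologicalType} : continuous (@fst X Y).
Proof. move=> [a b] O NO; apply: (filterS _ (nbhs_pair NO (@filterT _ _ (nbhs_filter b)))) => -[x y] [h1 h2] //. Qed.
Lemma snd_cont {X Y : topologicalType} : continuous (@snd X Y).
Proof. move=> [a b] O NO; apply: (filterS _ (nbhs_pair (@filterT _ _ (nbhs_filter a)) NO)) => -[x y] [h1 h2] //. Qed.

Lemma id_cont {X : topologicalType} : continuous (@id X).
Proof. by move=> x O h. Qed.

Lemma closed_preT {X Y : topologicalType} (f : X -> Y) (Z : set Y) :
  continuous f -> closed Z -> closed (f @^-1` Z).
Proof.
move=> cf cZ z cz.
have H := closed_pre closedT (cont_on_cont (D := setT) cf) cZ.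
have : closure (setT `&` f @^-1` Z) z by apply: closureS cz => w h.
by move=> /H [].
Qed.

Lemma compact_seq_union {X : topologicalType} {I : eqType} (s : seq I) (F : I -> set X) :
  (forall i, i \in s -> compact (F i)) -> compact [set x | exists i, i \in s /\ F i x].
Proof.
elim: s => [|a s IH] H.
  have -> : [set x | exists i, i \in [::] /\ F i x] = set0.
    by apply/seteqP; split => // x [i []].
  exact: compact0.
have -> : [set x | exists i, i \in a :: s /\ F i x] =
    F a `|` [set x | exists i, i \in s /\ F i x].
  apply/seteqP; split => x.
    move=> [i [] ]; rewrite in_cons => /orP [/eqP -> |iS] Fx; first by left.
    by right; exists i.
  case=> [Fx|[i [iS Fx]]]; first by exists a; rewrite mem_head.
  by exists i; rewrite in_cons iS orbT.
apply: compactU; first by apply: H; rewrite mem_head.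
by apply: IH => i iS; apply: H; rewrite in_cons iS orbT.
Qed.
Definition seqF (L : eqType) : set_system (seq L) :=
  [set S | exists s0 : seq L, forall i, {subset s0 <= i} -> S i].

Lemma seqF_filter (L : eqType) : Filter (@seqF L).
Proof.
constructor.
- by exists [::].
- move=> A B [s1 h1] [s2 h2]; exists (s1 ++ s2) => i sub; split.
    by apply: h1 => x xs; apply: sub; rewrite mem_cat xs.
  by apply: h2 => x xs; apply: sub; rewrite mem_cat xs orbT.
- by move=> A B AB [s1 h1]; exists s1 => i /h1 /AB.
Qed.

Lemma deg_finite (L : topologicalType) (Q : Type) (E : set L) (f : L -> Q) :
  compact E -> (forall q, open (f @^-1` [set q])) ->
  exists s : seq L, forall x, E x -> exists e, e \in s /\ f x = f e.
Proof.
move=> /compact_near_coveringP cE oF.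
pose Pr := fun (i : seq L) x => exists e, e \in i /\ f x = f e.
have prem : forall x, E x -> \forall x' \near x & i \near (@seqF L), Pr i x'.
  move=> x Ex; rewrite /prop_near2 /=; exists (f @^-1` [set f x], [set i : seq L | x \in i]) => /=.
    split; first by apply: open_nbhs_nbhs; split => //; apply: oF.
    by exists [:: x] => i; apply; rewrite mem_head.
  by move=> [x' i] /= [h1 h2]; exists x.
have [s0 h] := cE _ _ Pr (@seqF_filter L) prem.
exists s0 => x Ex.
by have := h s0 (fun _ h => h) x Ex.
Qed.

Section Graph.
Context {Q : Type} (G : group_law Q) (P : set Q) {L V : topologicalType}
  (g : PGraph Q L V).
Hypothesis qlo : quasi_lattice_ordered G P.
Hypothesis tg : is_topological_PGraph G P g.
Hypothesis rdp : rd_proper P g.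

Local Notation r := (rng g).
Local Notation s := (src g).
Local Notation c := (Defs.comp g).
Local Notation d := (deg g).
Local Notation mul := (gmul G).

Lemma vtx_rs v : r (vtx g v) = v /\ s (vtx g v) = v.
Proof. by case: tg => -[_ H _ _ _] _ _; apply: H. Qed.
Lemma comp_id l : c (vtx g (r l)) l = l /\ c l (vtx g (s l)) = l.
Proof. by case: tg => -[_ _ H _ _] _ _; apply: H. Qed.
Lemma comp_rs l m : s l = r m -> r (c l m) = r l /\ s (c l m) = s m.
Proof. by case: tg => -[_ _ _ H _] _ _; apply: H. Qed.
Lemma compA l m n : s l = r m -> s m = r n -> c (c l m) n = c l (c m n).
Proof. by case: tg => -[_ _ _ _ H] _ _; apply: H. Qed.
Lemma hausL : hausdorff_space L.
Proof. by case: tg => _ [H _ _ _ _] _. Qed.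
Lemma lcL : locally_compact [set: L].
Proof. by case: tg => _ [_ H _ _ _] _. Qed.
Lemma hausV : hausdorff_space V.
Proof. by case: tg => _ [_ _ H _ _] _. Qed.
Lemma cont_r : continuous r.
Proof. by case: tg => _ [_ _ _ _ [[H _] _ _ _ _]] _. Qed.
Lemma cont_s : continuous s.
Proof. by case: tg => _ [_ _ _ _ [[_ H] _ _ _ _]] _. Qed.
Lemma lh_s : local_homeo s.
Proof. by case: tg => _ [_ _ _ _ [_ H _ _ _]] _. Qed.
Lemma cont_comp : {within composable g, continuous compU g}.
Proof. by case: tg => _ [_ _ _ _ [_ _ _ H _]] _. Qed.
Lemma open_comp' : forall W : set (L * L), open W -> open (compU g @` (W `&` composable g)).
Proof. by case: tg => _ [_ _ _ _ [_ _ _ _ H]] _. Qed.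
Lemma degP l : P (d l).
Proof. by case: tg => _ _ [H _ _ _ _]. Qed.
Lemma deg_open n : open (d @^-1` [set n]).
Proof. by case: tg => _ _ [_ H _ _ _]. Qed.
Lemma deg_vtx v : d (vtx g v) = gone G.
Proof. by case: tg => _ _ [_ _ H _ _]. Qed.
Lemma deg_comp l m : s l = r m -> d (c l m) = mul (d l) (d m).
Proof. by case: tg => _ _ [_ _ _ H _]; apply: H. Qed.
Lemma fac_ex m n : P m -> P n -> exists fac : L -> L * L,
             [/\ (forall l, d l = mul m n ->
                    [/\ composable g (fac l), d (fac l).1 = m,
                        d (fac l).2 = n & compU g (fac l) = l]),
                 (forall x y, s x = r y -> d x = m -> d y = n ->
                    fac (c x y) = (x, y)) &
                 {within d @^-1` [set mul m n], continuous fac}].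
Proof. by case: tg => _ _ [_ _ _ _ H]; apply: H. Qed.

Lemma P1 : P (gone G).
Proof. by case: qlo => _ H _; case: (proj2 (H (gone G)) erefl). Qed.
Lemma Pmul a b : P a -> P b -> P (mul a b).
Proof. by case: qlo => H _ _; apply: H. Qed.
Lemma mulKl a b b' : mul a b = mul a b' -> b = b'.
Proof.
move=> h; have := congr1 (mul (ginv G a)) h.
by rewrite !gmulA !gmulV !gmul1.
Qed.

Lemma qle_refl a : qle G P a a.
Proof. by exists (gone G); [apply: P1|rewrite gmulx1]. Qed.
Lemma qle_trans a b k : qle G P a b -> qle G P b k -> qle G P a k.
Proof.
move=> [p Pp ->] [q Pq ->]; exists (mul p q); first exact: Pmul.
by rewrite gmulA.
Qed.
Lemma qle_antisym a b : qle G P a b -> qle G P b a -> a = b.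
Proof.
move=> [p Pp ->] [q Pq]; rewrite -gmulA -{1}(gmulx1 G a) => /mulKl e.
have pinv : ginv G p = q.
  have := congr1 (mul (ginv G p)) e; rewrite gmulx1 gmulA gmulV gmul1 => ->.
  by [].
have : P p /\ P (ginv G p) by rewrite pinv.
by case: qlo => _ H _ /H ->; rewrite gmulx1.
Qed.

Lemma fac_split m n l : P m -> P n -> d l = mul m n ->
  exists a b, [/\ s a = r b, d a = m, d b = n & c a b = l].
Proof.
move=> Pm Pn dl; have [fac [H1 _ _]] := fac_ex Pm Pn.
have [h1 h2 h3 h4] := H1 l dl; by exists (fac l).1, (fac l).2.
Qed.

Lemma uniq2 a1 b1 a2 b2 : s a1 = r b1 -> s a2 = r b2 ->
  c a1 b1 = c a2 b2 -> d a1 = d a2 -> a1 = a2 /\ b1 = b2.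
Proof.
move=> e1 e2 e da.
have db : d b1 = d b2.
  by apply: (@mulKl (d a1)); rewrite -deg_comp // e deg_comp // da.
have [fac [_ H2 _]] := fac_ex (degP a1) (degP b1).
have h1 := H2 _ _ e1 erefl erefl.
have h2 := H2 _ _ e2 (esym da) (esym db).
by move: h1; rewrite e h2; case=> -> ->.
Qed.

Lemma lcancel m x y : s m = r x -> s m = r y -> c m x = c m y -> x = y.
Proof. by move=> e1 e2 e; case: (uniq2 e1 e2 e erefl). Qed.

Lemma lep_refl l : lep g l l.
Proof.
exists (vtx g (s l)); split; first by rewrite (vtx_rs _).1.
by rewrite (comp_id l).2.
Qed.

Lemma lep_c a b : s a = r b -> lep g a (c a b).
Proof. by move=> e; exists b. Qed.

Lemma lep_rng a l : lep g a l -> r a = r l.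
Proof. by case=> nu [e ->]; rewrite (comp_rs e).1. Qed.

Lemma lep_trans a b l : lep g a b -> lep g b l -> lep g a l.
Proof.
move=> [x [ex ->]] [y [ey ->]].
have ey' : s x = r y by rewrite -ey (comp_rs ex).2.
exists (c x y); split; first by rewrite (comp_rs ey').1.
by rewrite compA.
Qed.

Lemma lep_uniq a b l : lep g a l -> lep g b l -> d a = d b -> a = b.
Proof.
move=> [x [ex ->]] [y [ey e]] dab.
by case: (uniq2 ex ey e dab).
Qed.

Lemma lep_qle a l : lep g a l -> qle G P (d a) (d l).
Proof. by move=> [x [ex ->]]; exists (d x); [apply: degP|rewrite deg_comp]. Qed.

Lemma lep_prefix a b l : lep g a l -> lep g b l -> qle G P (d a) (d b) -> lep g a b.
Proof.
move=> la [y [ey el]] [p Pp dab]; subst l.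
have [b1 [b2 [e12 d1 d2 eb]]] := fac_split (degP a) Pp dab.
have hb1 : lep g b1 (c b y).
  apply: lep_trans (lep_c e12) _; rewrite eb; exact: lep_c.
have -> : a = b1 by apply: (lep_uniq la hb1 (esym d1)).
rewrite -eb; exact: lep_c.
Qed.

Lemma lub_ex a b k : P a -> P b -> qle G P a k -> qle G P b k ->
  exists l, [/\ qle G P a l, qle G P b l & forall k, qle G P a k -> qle G P b k -> qle G P l k].
Proof. by move=> Pa Pb h1 h2; case: qlo => _ _ H; apply: H => //; exists k. Qed.

Lemma lep_cl rho a b : s rho = r a -> lep g a b -> lep g (c rho a) (c rho b).
Proof.
move=> e [x [ex ->]]; exists x; split; first by rewrite (comp_rs e).2.
by rewrite compA.
Qed.

Lemma lep_cancel rho a b : s rho = r a -> s rho = r b ->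
  lep g (c rho a) (c rho b) -> lep g a b.
Proof.
move=> ea eb [x [ex e]].
have ex' : s a = r x by rewrite -ex (comp_rs ea).2.
exists x; split => //; apply: (lcancel eb _ (esym _)).
  by rewrite (comp_rs ex').1.
by rewrite e compA.
Qed.

Lemma Omega_rng A a b : Omega g A -> A a -> A b -> r a = r b.
Proof.
move=> [_ _ _ dA] Aa Ab; have [nu [_ h1 h2]] := dA a b Aa Ab.
by rewrite (lep_rng h1) (lep_rng h2).
Qed.

Lemma composable_closed : closed (composable g).
Proof.
have c1 : cont_on (setT : set (L * L)) (s \o fst) := @cont_on_comp _ _ _ setT setT _ _ (cont_on_cont fst_cont) (cont_on_cont cont_s) (fun _ _ => I).
have c2 : cont_on (setT : set (L * L)) (r \o snd) := @cont_on_comp _ _ _ setT setT _ _ (cont_on_cont snd_cont) (cont_on_cont cont_r) (fun _ _ => I).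
have H := closed_eq hausV closedT c1 c2.
move=> z cz; have : closure (setT `&` [set z | (s \o fst) z = (r \o snd) z]) z.
  by apply: closureS cz => w h.
by move=> /H [].
Qed.

Lemma fiber_closed n : closed (d @^-1` [set n]).
Proof.
move=> z cz.
have N : nbhs z (d @^-1` [set d z]) by apply: open_nbhs_nbhs; split => //; exact: deg_open.
by have [w [h1 h2]] := cz _ N; move: h1 h2; rewrite /preimage /= => -> ->.
Qed.

Lemma vset_closed (v : V) : closed [set v].
Proof. by apply: compact_closed; [exact: hausV|exact: compact_set1]. Qed.

Lemma dot_boundary A n : boundary_path g A -> P n -> dotP g A n !=set0 ->
  boundary_path g (dotP g A n).
Proof.
move=> [[A0 cA hA dA] ext] Pn ne.
have hered : hereditary g (dotP g A n).
  move=> la nu [mu [dm em Aml]] lnl.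
  have em' : s mu = r nu by rewrite em (lep_rng lnl).
  exists mu; split => //; apply: hA Aml _; exact: lep_cl.
split.
- split => //.
  + have [a0 Aa0] := A0.
    pose K := r @^-1` [set r a0] `&` d @^-1` [set n].
    have cK : compact K := rdp (@compact_set1 _ (r a0)) Pn.
    pose C := composable g `&` compU g @^-1` A.
    have cC : closed C := closed_pre composable_closed (cont_on_within cont_comp) cA.
    have -> : dotP g A n = [set y | exists x, K x /\ C (x, y)].
      apply/seteqP; split.
      * move=> y [mu [dm em Am]]; exists mu; split; split => //.
        rewrite /= -(comp_rs em).1; exact: (Omega_rng (And4 A0 cA hA dA) Am Aa0).
      * by move=> y [mu [[rm dm] [em Am]]]; exists mu.
    exact: proj_closed cK cC.
  + move=> la1 la2 [mu1 [d1 e1 A1]] [mu2 [d2 e2 A2]].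
    have [nu [Anu l1 l2]] := dA _ _ A1 A2.
    have m1 : lep g mu1 nu := lep_trans (lep_c e1) l1.
    have m2 : lep g mu2 nu := lep_trans (lep_c e2) l2.
    have e12 : mu1 = mu2 by apply: lep_uniq m1 m2 _; rewrite d1 d2.
    subst mu2.
    case: m1 => rh [erh enu].
    exists rh; split.
    * by exists mu1; split => //; rewrite -enu.
    * by apply: (lep_cancel e1 erh); rewrite -enu.
    * by apply: (lep_cancel e2 erh); rewrite -enu.
- move=> la [mu [dm em Aml]]; split; first by exists mu.
  move=> E cE exE nE.
  have [_ H] := ext _ Aml.
  have [mu' [Em' em' Am']] : exists mu', [/\ E mu', s (c mu la) = r mu' & A (c (c mu la) mu')].
    by apply: H => //; rewrite (comp_rs em).2.
  have em'' : s la = r mu' by rewrite -em' (comp_rs em).2.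
  exists mu'; split => //; exists mu; split => //.
    by rewrite (comp_rs em'').1.
  by rewrite -compA.
Qed.


Lemma boundary_closed : closed_in_Omega g (boundary_path g).
Proof.
move=> A OA nB.
case: (OA) => A0 cA hA dA.
have [la [Ala nla]] : exists la, A la /\ ~ extendable g A la.
  apply: contrapT => H; apply: nB; split => // la Ala.
  by apply: contrapT => nla; apply: H; exists la.
have [E [cE exE nE nex]] : exists E, [/\ compact E, exhaustive g E,
    nbhs (s la) (r @` E) & ~ exists mu, [/\ E mu, s la = r mu & A (c la mu)]].
  apply: contrapT => H; apply: nla; split => // E cE exE nE.
  by apply: contrapT => h; apply: H; exists E.
have hlc : compact_near (within setT (nbhs la)) := @lcL la I.
have [U0 hU0 [cU0 clU0]] := hlc.
have NU0 : nbhs la U0 by move: hU0; rewrite withinET.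
pose KU := U0 `&` d @^-1` [set d la].
have cKU : compact KU := compact_closedI cU0 (@fiber_closed (d la)).
have NKU : nbhs la KU.
  apply: (@filterI _ _ (nbhs_filter la)) => //.
  by apply: open_nbhs_nbhs; split => //; exact: deg_open.
pose K := compU g @` ((KU `*` E) `&` composable g).
have cK : compact K.
  apply: continuous_compact.
    exact: continuous_subspaceW (@subIsetr _ _ _) cont_comp.
  exact: compact_closedI (compact_setX cKU cE) composable_closed.
pose U := interior KU `&` s @^-1` (interior (r @` E)).
have oU : open U.
  apply: openI; first exact: open_interior.
  by apply: open_comp; [move=> x _; exact: cont_s|exact: open_interior].
exists K, [set U]; split.
- exact: cK.
- exact: finite_set1.
- by move=> U' ->.
- split.
  + rewrite -subset0 => x [Ax [[a mu] [[[KUa0 KUa1] Emu] emu] ex]].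
    rewrite /compU /= in ex; subst x.
    have Aa : A a := hA _ _ Ax (lep_c emu).
    have [nu [_ l1 l2]] := dA _ _ Ala Aa.
    have ea : la = a by apply: lep_uniq l1 l2 _; rewrite KUa1.
    subst a; apply: nex; exists mu; split => //.
  + by move=> U' ->; exists la; split => //; split => //.
- move=> B OB [BK BU] [_ extB].
  have [la' [Bla' [Ula'1 Ula'2]]] := BU U erefl.
  have [_ H] := extB la' Bla'.
  have [mu [Emu e Bc]] := H E cE exE Ula'2.
  have : (B `&` K) (c la' mu).
    split => //; exists (la', mu) => //; split => //; split => //.
    exact: interior_subset Ula'1.
  by rewrite BK.
Qed.


Lemma cont_on_rho rho : cont_on [set y | s rho = r y] (fun y => c rho y).
Proof.
have h1 : cont_on [set y | s rho = r y] (fun y : L => (rho, y)).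
  apply: cont_on_pair; [exact: (cont_on_cont (@cst_continuous L L rho))|exact: (cont_on_cont (@id_cont L))].
have := cont_on_comp h1 (cont_on_within cont_comp) (fun y (e : s rho = r y) => e).
by [].
Qed.

Lemma rhoB_closed B rho : Omega g B -> (forall b, B b -> r b = s rho) ->
  closed (rho_mul g rho B).
Proof.
move=> [B0 cB hB dB] rB la cla.
pose p := d la.
suff : closed (rho_mul g rho B `&` d @^-1` [set p]).
  move=> H; suff : closure (rho_mul g rho B `&` d @^-1` [set p]) la by move=> /H [].
  move=> O NO.
  have NF : nbhs la (d @^-1` [set p]) by apply: open_nbhs_nbhs; split => //; exact: deg_open.
  have [w [Rw [Ow Fw]]] := cla _ (@filterI _ _ (nbhs_filter la) _ _ NO NF).
  by exists w.
case: (pselect (exists la0, rho_mul g rho B la0 /\ d la0 = p)); last first.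
  move=> none; have -> : rho_mul g rho B `&` d @^-1` [set p] = set0.
    by apply/seteqP; split => // x [h1 h2]; exfalso; apply: none; exists x.
  exact: closed0.
move=> [la0 [[nu0 [Bnu0 enu0 l0]] dl0]].
have [l [q1 q2 lubH]] : exists l, [/\ qle G P p l, qle G P (d rho) l &
    forall k, qle G P p k -> qle G P (d rho) k -> qle G P l k].
  apply: (@lub_ex _ _ (d (c rho nu0))); [exact: degP|exact: degP| |].
    by rewrite -dl0; exact: lep_qle l0.
  exact: lep_qle (lep_c enu0).
case: q1 => p' Pp' el1; case: q2 => t Pt el2.
have [fac [H1 H2 H3]] := fac_ex (degP la) Pp'.
pose K := (r @^-1` [set s rho] `&` d @^-1` [set t]) `&` B.
have cK : compact K := compact_closedI (rdp (@compact_set1 _ (s rho)) Pt) cB.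
pose Dc := (fst @^-1` (r @^-1` [set s rho] `&` d @^-1` [set t])) `&`
           (snd @^-1` (d @^-1` [set p])) : set (L * L).
have cDc : closed Dc.
  apply: closedI; apply: closed_preT.
  - exact: fst_cont.
  - apply: closedI; [exact: (closed_preT cont_r (@vset_closed (s rho)))|exact: fiber_closed].
  - exact: snd_cont.
  - exact: fiber_closed.
have cf1 : cont_on Dc (fun z => (fac (c rho z.1)).1).
  have a1 : cont_on Dc (fun z : L * L => c rho z.1).
    apply: (@cont_on_comp _ _ _ Dc [set y | s rho = r y] fst (fun y => c rho y) (cont_on_cont fst_cont) (@cont_on_rho rho)).
    by move=> z [[h1 _] _].
  have a2 := cont_on_within H3.
  have a3 := cont_on_comp a1 a2.
  have a4 : cont_on Dc (fac \o (fun z : L * L => c rho z.1)).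
    apply: a3 => z [[h1 h2] _] /=.
    by rewrite deg_comp // h2 -el2 el1.
  exact: (@cont_on_comp _ _ _ Dc setT _ fst a4 (cont_on_cont fst_cont) (fun _ _ => I)).
have cf2 : cont_on Dc snd := cont_on_cont snd_cont.
pose C := Dc `&` [set z | (fac (c rho z.1)).1 = z.2].
have cC : closed C := closed_eq hausL cDc cf1 cf2.
have -> : rho_mul g rho B `&` d @^-1` [set p] = [set y | exists x, K x /\ C (x, y)].
  apply/seteqP; split.
  - move=> y [[nu [Bnu enu ly]] dy].
    have qk : qle G P l (d (c rho nu)).
      apply: lubH; last exact: lep_qle (lep_c enu).
      by rewrite -dy; exact: lep_qle ly.
    case: qk => k Pk ek.
    have dnu : d nu = gmul G t k.
      apply: (@mulKl (d rho)); rewrite -deg_comp // ek el2 gmulA //.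
    have [al [be [eab dal dbe enu']]] := fac_split Pt Pk dnu.
    have Bal : B al by apply: hB Bnu _; rewrite -enu'; exact: lep_c.
    have ral : s rho = r al by rewrite -(rB _ Bal).
    exists al; split; first by split => //; split => //=; rewrite rB.
    split; first by split => //; split.
    have dcl : d (c rho al) = gmul G p p' by rewrite deg_comp // dal -el2 el1.
    have [x1 x2 x3 x4] := H1 _ dcl.
    have x4' : c (fac (c rho al)).1 (fac (c rho al)).2 = c rho al := x4.
    apply: (lep_uniq (l := c rho nu)) => //=.
    + apply: (lep_trans (b := c rho al)).
        by have := lep_c x1; rewrite x4'.
      by apply: lep_cl => //; rewrite -enu'; exact: lep_c.
    + by rewrite x2.
  - move=> y [al [[[rl dl] Bal] [[[rl' dl'] dy] ef]]].
    split => //.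
    have dcl : d (c rho al) = gmul G p p' by rewrite deg_comp // dl -el2 el1.
    have [x1 x2 x3 x4] := H1 _ dcl.
    have x4' : c (fac (c rho al)).1 (fac (c rho al)).2 = c rho al := x4.
    exists al; split; [exact: Bal| by move: rl; rewrite /preimage /= => ->|].
    have ef' : (fac (c rho al)).1 = y := ef.
    by rewrite -ef'; have := lep_c x1; rewrite x4'.
exact: proj_closed cK cC.
Qed.


Definition islub (a b l : Q) := [/\ qle G P a l, qle G P b l &
  forall k, qle G P a k -> qle G P b k -> qle G P l k].

Lemma islub_uniq a b l1 l2 : islub a b l1 -> islub a b l2 -> l1 = l2.
Proof.
move=> [h1 h2 h3] [k1 k2 k3]; apply: qle_antisym; [exact: h3|exact: k3].
Qed.

Lemma extend_down A la w : Omega g A -> s la = r w -> A (c la w) ->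
  extendable g A (c la w) -> extendable g A la.
Proof.
move=> [A0 cA hA dA] esw Axi [_ extxi].
split; first exact: (hA _ _ Axi (lep_c esw)).
move=> E cE exE nE.
have [sq hsq] := deg_finite cE deg_open.
have [O [oO Ow injO _ openO]] := lh_s w.
have hlc : compact_near (within setT (nbhs w)) := @lcL w I.
have [U0 hU0 [cU0 clU0]] := hlc.
have NU0 : nbhs w U0 by move: hU0; rewrite withinET.
have NO : nbhs w O by apply: open_nbhs_nbhs.
have [W0 [cW0 NW0 sW0]] := compact_nbhs_in hausL NU0 cU0 clU0 NO.
have crE : compact (r @` E) := continuous_compact (continuous_subspaceT cont_r) cE.
have clrE : closed (r @` E) := compact_closed hausV crE.
pose W := W0 `&` (r @^-1` (r @` E) `&` d @^-1` [set d w]).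
have cW : compact W.
  exact: compact_closedI cW0 (closedI (closed_preT cont_r clrE) (@fiber_closed (d w))).
have NW : nbhs w W.
  apply: (@filterI _ _ (nbhs_filter w)) => //.
  apply: (@filterI _ _ (nbhs_filter w)).
    by apply: cont_r; rewrite -esw.
  by apply: open_nbhs_nbhs; split => //; exact: deg_open.
have WO : W `<=` O by move=> x [/sW0].
pose E' := [set be | exists w' mu, [/\ W w', s w' = r be, E mu, lep g mu (c w' be)
   & islub (d w) (d mu) (mul (d w) (d be))]].
have Ext : forall w' tau, W w' -> s w' = r tau ->
    exists be ga, [/\ E' be, lep g tau ga & lep g be ga].
  move=> w' tau Ww' etau; case: (Ww') => _ [[e0 Ee0 re0] dw'].
  have : (r @` E) (r (c w' tau)) by rewrite (comp_rs etau).1 -re0; exists e0.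
  move=> /exE [mu Emu [ze [l1 l2]]].
  have qw : qle G P (d w) (d ze).
    by rewrite -dw'; apply: lep_qle (lep_trans (lep_c etau) l1).
  have [ll [m1 m2 mH]] := lub_ex (degP w) (degP mu) qw (lep_qle l2).
  have [k Pk ek] := mH _ qw (lep_qle l2).
  case: (m1) => tt Ptt ell.
  case: l1 => nu [enu eze].
  have etn : s tau = r nu by rewrite -enu (comp_rs etau).2.
  pose ga := c tau nu.
  have eze' : ze = c w' ga by rewrite eze compA.
  have ewg : s w' = r ga by rewrite /ga (comp_rs etn).1.
  have dga : d ga = mul tt k.
    apply: (@mulKl (d w)); rewrite -dw' -(deg_comp ewg) -eze' ek ell dw' gmulA //.
  have [be [be' [ebb dbe dbe' ega]]] := fac_split Ptt Pk dga.
  have ewb : s w' = r be by rewrite ewg -ega (comp_rs ebb).1.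
  exists be, ga; split.
  - exists w', mu; split => //.
    + apply: (lep_prefix l2).
      * rewrite eze' -ega; apply: lep_cl => //; exact: lep_c.
      * rewrite deg_comp // dw' dbe -ell; exact: m2.
    + by rewrite dbe -ell.
  - exact: lep_c etn.
  - rewrite -ega; exact: lep_c.
have exE' : exhaustive g E'.
  move=> tau [be0 [w' [mu0 [Ww' e' _ _ _]]] ere].
  have [be [ga [E'be l1 l2]]] := Ext w' tau Ww' (etrans e' ere).
  by exists be => //; exists ga.
have nE' : nbhs (s (c la w)) (r @` E').
  rewrite (comp_rs esw).2.
  have oS : open (s @` interior W) := openO _ (@open_interior _ W) (fun x h => WO x (interior_subset h)).
  apply: (@filterS _ _ (nbhs_filter (s w)) (s @` interior W)).
    move=> v [w' Iw' <-].
    have Ww' : W w' := interior_subset Iw'.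
    have [be [ga [E'be l1 l2]]] := Ext w' (vtx g (s w')) Ww' (esym (vtx_rs _).1).
    exists be => //; rewrite (lep_rng l2) -(lep_rng l1) (vtx_rs _).1 //.
  by apply: open_nbhs_nbhs; split => //; exists w.
have cE' : compact E'.
  pose Eq e := [set be | exists w' mu, [/\ W w', s w' = r be, E mu /\ d mu = d e,
     lep g mu (c w' be) & islub (d w) (d mu) (mul (d w) (d be))]].
  have -> : E' = [set be | exists e, e \in sq /\ Eq e be].
    apply/seteqP; split.
    - move=> be [w' [mu [h1 h2 h3 h4 h5]]]; have [e [es de]] := hsq _ h3.
      by exists e; split => //; exists w', mu; split => //; split.
    - by move=> be [e [_ [w' [mu [h1 h2 [h3 _] h4 h5]]]]]; exists w', mu; split.
  apply: compact_seq_union => e _.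
  case: (pselect (exists ll, islub (d w) (d e) ll)); last first.
    move=> none; have -> : Eq e = set0.
      apply/seteqP; split => // be [w' [mu [_ _ [_ dm] _ isl]]]; exfalso; apply: none.
      by rewrite -dm; exists (mul (d w) (d be)).
    exact: compact0.
  move=> [ll isl]; have isl' := isl; case: isl' => m1 m2 _.
  case: m1 => tt Ptt ell; case: m2 => p' Pp' ell2.
  have [fac [H1 H2 H3]] := fac_ex (degP e) Pp'.
  have cY : compact (r @^-1` (s @` W) `&` d @^-1` [set tt]).
    apply: rdp Ptt; exact: continuous_compact (continuous_subspaceT cont_s) cW.
  pose Ds := composable g `&` ((fst @^-1` (d @^-1` [set d w])) `&`
      (snd @^-1` (d @^-1` [set tt]))) : set (L * L).
  have cDs : closed Ds.
    apply: closedI; first exact: composable_closed.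
    apply: closedI; apply: closed_preT; [exact: fst_cont|exact: fiber_closed|exact: snd_cont|exact: fiber_closed].
  have ch : cont_on Ds (fun z => (fac (compU g z)).1).
    have a1 : cont_on Ds (compU g) := cont_onS (@subIsetl _ _ _) (cont_on_within cont_comp).
    have a2 : cont_on Ds (fac \o compU g).
      apply: (cont_on_comp a1 (cont_on_within H3)) => z [cz [dz1 dz2]] /=.
      by rewrite /compU deg_comp // dz1 dz2 -ell ell2.
    exact: (@cont_on_comp _ _ _ Ds setT _ fst a2 (cont_on_cont fst_cont) (fun _ _ => I)).
  have cEc : closed E := compact_closed hausL cE.
  pose S := (W `*` (r @^-1` (s @` W) `&` d @^-1` [set tt])) `&`
     (Ds `&` (fun z => (fac (compU g z)).1) @^-1` E).
  have cS : compact S := compact_closedI (compact_setX cW cY) (closed_pre cDs ch cEc).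
  have -> : Eq e = snd @` S.
    apply/seteqP; split.
    - move=> be [w' [mu [Ww' ewb [Emu dmu] lmu islb]]].
      have eql : mul (d w) (d be) = ll by apply: islub_uniq islb _; rewrite dmu.
      have dbe : d be = tt by apply: (@mulKl (d w)); rewrite eql ell.
      have dw' : d w' = d w by case: Ww' => _ [_ ->].
      have dcl : d (c w' be) = mul (d e) p' by rewrite deg_comp // dw' dbe -ell ell2.
      have [x1 x2 x3 x4] := H1 _ dcl.
      have x4' : c (fac (c w' be)).1 (fac (c w' be)).2 = c w' be := x4.
      exists (w', be) => //; split.
        by split => //; split => //; exists w'.
      split; first by split => //; split.
      change (E (fac (c w' be)).1).
      have -> : (fac (c w' be)).1 = mu.
        apply: (lep_uniq (l := c w' be)).
        - by have := lep_c x1; rewrite x4'.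
        - exact: lmu.
        - by rewrite x2 dmu.
      exact: Emu.
    - move=> be [[w' b2] [[Ww' [_ dbe]] [[cz [dz1 dz2]] Eh]] <-] /=.
      have dbe' : d b2 = tt := dbe.
      have dw' : d w' = d w := dz1.
      have dcl : d (c w' b2) = mul (d e) p' by rewrite deg_comp // dw' dbe' -ell ell2.
      have [x1 x2 x3 x4] := H1 _ dcl.
      have x4' : c (fac (c w' b2)).1 (fac (c w' b2)).2 = c w' b2 := x4.
      exists w', (fac (c w' b2)).1; split; [exact: Ww'|exact: cz|split; [exact: Eh|exact: x2]|by have := lep_c x1; rewrite x4'|by rewrite x2 dbe' -ell].
  exact: continuous_compact (continuous_subspaceT snd_cont) cS.
have [be [E'be ebe Ac]] := extxi E' cE' exE' nE'.
case: E'be => w' [mu [Ww' ewb Emu lmu _]].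
have ew : w' = w.
  apply: injO; [exact: WO|exact: Ow|].
  by rewrite ewb -ebe (comp_rs esw).2.
subst w'.
have rmu : s la = r mu by rewrite esw (lep_rng lmu) (comp_rs ewb).1.
exists mu; split => //.
apply: hA Ac _.
rewrite compA //; apply: lep_cl => //.
Qed.


Lemma rho_boundary B rho : boundary_path g B -> (forall b, B b -> r b = s rho) ->
  boundary_path g (rho_mul g rho B).
Proof.
move=> [OB extB] rB; have OB' := OB; case: OB' => B0 cB hB dB.
have hered : hereditary g (rho_mul g rho B).
  move=> la mu [nu [Bnu e l]] lm; exists nu; split => //; exact: lep_trans lm l.
have Om : Omega g (rho_mul g rho B).
  split.
  - have [b0 Bb0] := B0; exists rho; exists b0; split => //.
      exact: (esym (rB _ Bb0)).
    exact: lep_c (esym (rB _ Bb0)).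
  - exact: rhoB_closed OB rB.
  - exact: hered.
  - move=> la1 la2 [nu1 [B1 e1 l1]] [nu2 [B2 e2 l2]].
    have [nu [Bnu m1 m2]] := dB _ _ B1 B2.
    have enu : s rho = r nu := esym (rB _ Bnu).
    exists (c rho nu); split.
    + by exists nu; split => //; exact: lep_refl.
    + exact: lep_trans l1 (lep_cl e1 m1).
    + exact: lep_trans l2 (lep_cl e2 m2).
split => // la [nu [Bnu enu lla]].
have ext1 : extendable g (rho_mul g rho B) (c rho nu).
  split; first by exists nu; split => //; exact: lep_refl.
  move=> E cE exE nE.
  have [_ H] := extB nu Bnu.
  have [mu [Emu e Bm]] := H E cE exE (eq_ind _ (fun v => nbhs v _) nE _ (comp_rs enu).2).
  exists mu; split => //; first by rewrite (comp_rs enu).2.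
  exists (c nu mu); split => //.
    by rewrite (comp_rs e).1.
  rewrite compA //; exact: lep_refl.
case: lla => w [ew ela].
have Axi : rho_mul g rho B (c la w) by rewrite -ela; exists nu; split => //; exact: lep_refl.
rewrite ela in ext1.
exact: extend_down Om ew Axi ext1.
Qed.

End Graph.

Theorem proposition6p16 (Q : Type) (G : group_law Q) (P : set Q)
    (L V : topologicalType) (g : PGraph Q L V) :
  quasi_lattice_ordered G P ->
  is_topological_PGraph G P g ->
  rd_proper P g ->
  [/\ closed_in_Omega g (boundary_path g),
      (forall (A : set L) (n : Q), boundary_path g A -> P n ->
         dotP g A n !=set0 -> boundary_path g (dotP g A n)) &
      (forall (B : set L) (rho : L), boundary_path g B ->
         (forall b, B b -> rng g b = src g rho) ->
         boundary_path g (rho_mul g rho B))].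
Proof.
move=> qlo tg rdp; split.
- exact: (boundary_closed tg).
- by move=> A n h Pn ne; apply: (dot_boundary tg rdp).
- by move=> B rho h hr; apply: (rho_boundary qlo tg rdp).
Qed.
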